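(* Let $a, b \in \mathbb Z_g$ and let $1 \leq i < j \leq k$. Suppose that $\vec \theta \in \mathbb R^d$ and $\epsilon > 0$ have the property that for any pair of vectors $\vec x, \vec y \in (\mathbb Z_g)^k$, there are $z \in \mathbb Z$ and $\epsilon_1$ with $|\epsilon_1| < \epsilon$ such that $\vec \theta \cdot Z(\vec x) - \vec \theta \cdot Z(\vec y) = 2 \pi z + \epsilon_1$. Then there exists $\epsilon_2$ with $|\epsilon_2| < 2 \epsilon$ such that \[ \theta_{\{i,j\},a} + \theta_{\{i,j\},b} \equiv \theta_{\{i,j\},a+b} + \epsilon_2 \pmod{2 \pi},\] where the undefined value $\theta_{\{i,j\},0}$ is understood to be $0$.
   Context: Let $g\ge 2$, $k\ge 2$ be integers, $\mathbb Z_g$ the integers mod $g$, and $d=\binom{k}{2}(g-1)$. Index the coordinates of $\mathbb R^d$ by pairs $(\{i,j\},a)$ with $1\le i<j\le k$ and $a\in\mathbb Z_g\setminus\{0\}$. Define $Z:(\mathbb Z_g)^k\to\mathbb R^d$ by $[Z(\vec x)]_{\{i,j\},a}=1-1/g$ if $x_i-x_j=a$ and $-1/g$ otherwise. *)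

(* Defs.v *)
From HB Require Import structures.
From mathcomp Require Import all_boot all_order all_algebra.
From mathcomp Require Import all_classical all_reals all_analysis.
Set Implicit Arguments. Unset Strict Implicit. Unset Printing Implicit Defensive.
Import Order.TTheory GRing.Theory Num.Theory.
Local Open Scope ring_scope.

(* Coordinates of R^d are indexed by ({i,j}, a) with i < j in 'I_k (0-based
   version of 1 <= i < j <= k) and a in Z_g \ {0}.  A vector theta in R^d is
   represented by a function theta : 'I_k -> 'I_k -> 'Z_g -> R, of which only
   the values with i < j and a != 0 are ever used. *)

Definition Zvec (R : realType) (g k : nat) (x : 'I_k -> 'Z_g)
  (i j : 'I_k) (a : 'Z_g) : R :=
  if x i - x j == a then 1 - (g%:R)^-1 else - (g%:R)^-1.

Definition dotZ (R : realType) (g k : nat) (theta : 'I_k -> 'I_k -> 'Z_g -> R)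
  (x : 'I_k -> 'Z_g) : R :=
  \sum_(i : 'I_k) \sum_(j : 'I_k | (i < j)%N) \sum_(a : 'Z_g | a != 0)
     theta i j a * Zvec R x i j a.

Definition thetaz (R : realType) (g k : nat) (theta : 'I_k -> 'I_k -> 'Z_g -> R)
  (i j : 'I_k) (a : 'Z_g) : R :=
  if a == 0 then 0 else theta i j a.

(* Main.v *)
Require Import Defs.
From HB Require Import structures.
From mathcomp Require Import all_boot all_order all_algebra.
From mathcomp Require Import all_classical all_reals all_analysis.
From mathcomp Require Import ring lra.
Import Order.TTheory GRing.Theory Num.Theory.
Local Open Scope ring_scope.

Lemma sum_ind (R : realType) (g k : nat) (theta : 'I_k -> 'I_k -> 'Z_g -> R)
  p q (d : 'Z_g) :
  \sum_(c : 'Z_g | c != 0) theta p q c * (if d == c then 1 else 0)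
  = thetaz theta p q d.
Proof.
rewrite /thetaz; case: eqP => [->|/eqP nd].
  by rewrite big1 // => c cn; rewrite eq_sym (negbTE cn) mulr0.
rewrite (bigD1 d) //= eqxx mulr1 big1 ?addr0 // => c /andP [_ cd].
by rewrite eq_sym (negbTE cd) mulr0.
Qed.

Lemma dotZE (R : realType) (g k : nat) (theta : 'I_k -> 'I_k -> 'Z_g -> R)
  (x : 'I_k -> 'Z_g) :
  dotZ theta x = \sum_(p : 'I_k) \sum_(q : 'I_k | (p < q)%N)
     (thetaz theta p q (x p - x q) -
      \sum_(c : 'Z_g | c != 0) theta p q c * (g%:R)^-1).
Proof.
rewrite /dotZ; apply: eq_bigr => p _; apply: eq_bigr => q _.
rewrite -sum_ind -sumrB; apply: eq_bigr => c _.
by rewrite /Zvec; case: ifP => _; rewrite ?mul1r; ring.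
Qed.

Definition X (g k : nat) (i j : 'I_k) (s t : 'Z_g) : 'I_k -> 'Z_g :=
  fun m => if m == i then s else if m == j then t else 0.
Arguments X {g k}.

Lemma termE (R : realType) (g k : nat) (theta : 'I_k -> 'I_k -> 'Z_g -> R)
  (i j p q : 'I_k) (s t s' t' : 'Z_g) : (i < j)%N -> (p < q)%N ->
  ~~ ((p == i) && (q == j)) ->
  let F := fun y : 'I_k -> 'Z_g => thetaz theta p q (y p - y q) in
  F (X i j s t) - F (X i j s t') - (F (X i j s' t) - F (X i j s' t')) = 0.
Proof.
move=> hij hpq hn F; move: hn; rewrite /F /X.
case ei: (p == i); case ej: (p == j); case fi: (q == i); case fj: (q == j) => //= _;
  try (rewrite ?subrr; ring).
- by move/eqP: fi => fi; move/eqP: fj => fj; move: hij; rewrite -fi fj ltnn.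
- move/eqP: fi => fi; move/eqP: ej => ej; move: hij hpq; rewrite -fi -ej => h1 h2.
  by move: (ltn_trans h1 h2); rewrite ltnn.
Qed.

Theorem lemma2p1 (R : realType) (g k : nat) (hg : (2 <= g)%N) (hk : (2 <= k)%N)
  (a b : 'Z_g) (i j : 'I_k) (hij : (i < j)%N)
  (theta : 'I_k -> 'I_k -> 'Z_g -> R) (eps : R) (heps : 0 < eps)
  (H : forall x y : 'I_k -> 'Z_g, exists (z : int) (eps1 : R),
        `|eps1| < eps /\
        dotZ theta x - dotZ theta y = 2 * pi * z%:~R + eps1) :
  exists eps2 : R, `|eps2| < 2 * eps /\
    exists z : int,
      thetaz theta i j a + thetaz theta i j b
      = thetaz theta i j (a + b) + eps2 + 2 * pi * z%:~R.
Proof.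
have ji : j != i by rewrite neq_ltn hij orbT.
have K : forall A B C D E : R, ((A - E) - (B - E)) - ((C - E) - (D - E))
   = A - B - (C - D) by move=> *; ring.
have key : dotZ theta (X i j a (- b)) - dotZ theta (X i j a 0)
   - (dotZ theta (X i j 0 (- b)) - dotZ theta (X i j 0 0))
   = thetaz theta i j (a + b) - thetaz theta i j a - thetaz theta i j b.
  rewrite !dotZE -!sumrB.
  rewrite (bigD1 i) //= -!sumrB (bigD1 j) //=.
  rewrite [Y in _ + _ + Y = _]big1 ?addr0; last first.
    move=> p pi; rewrite -!sumrB big1 // => q pq; rewrite K; apply: termE => //.
    by rewrite (negbTE pi).
  rewrite [Y in _ + Y = _]big1 ?addr0; last first.
    move=> q /andP [iq qj]; rewrite K; apply: termE => //.
    by rewrite eqxx.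
  rewrite K /X eqxx (negbTE ji) eqxx !subr0 ?opprK ?sub0r ?add0r.
  done.
have [z1 [e1 [he1 E1]]] := H (X i j a (- b)) (X i j a 0).
have [z2 [e2 [he2 E2]]] := H (X i j 0 (- b)) (X i j 0 0).
exists (e2 - e1); split.
  apply: (le_lt_trans (ler_normB _ _)); lra.
exists (z2 - z1); rewrite E1 E2 in key; rewrite rmorphB /=.
set P := 2 * pi; move: key; rewrite !mulrBr; set u := P * z1%:~R; set v := P * z2%:~R.
move=> key; lra.
Qed.
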